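(* Let $0<m<L$ and $\delta\in[0,1)$. Suppose \[ \frac{1}{L} \leq \alpha \leq \frac{2}{(1+\delta)L + (1-\delta)m} \] and $\rho \geq \rho_\mathrm{GD}(\delta) := \max\big(1-(1-\delta)\alpha m,\ (1+\delta)\alpha L -1\big)$. Then there exists $c>0$ such that for every $f\in\mathcal{F}(m,L)$ with minimizer $x_\star$, every sequence $x(k)\in\mathbb{R}^n$ and every error sequence $e(k)\in\mathbb{R}^n$ satisfying, for all $k\ge0$, \[ x(k+1) = x(k) - \alpha\big(\nabla f(x(k)) + e(k)\big), \qquad |e(k)| \leq \delta\, |\nabla f(x(k))|, \] we have $|x(k)-x_\star| \leq c\, \rho^k\, |x(0)-x_\star|$ for all $k\ge 0$.
   Context: $\mathcal{F}(m,L)$ denotes the set of $C^1$ functions $f:\mathbb{R}^n\to\mathbb{R}$ that are $m$-strongly convex (i.e. $f(x)-\tfrac m2|x|^2$ is convex) and have $L$-Lipschitz gradient ($|\nabla f(x_1)-\nabla f(x_2)|\le L|x_1-x_2|$ for all $x_1,x_2$). For $m>0$ such $f$ has a unique global minimizer $x_\star$. The constant $c$ may depend on $m,L,\alpha,\delta,\rho$ but not on $f$, $x$ or $e$. *)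

(* Defs.v *)
From HB Require Import structures.
From mathcomp Require Import all_boot all_order all_algebra.
From mathcomp Require Import all_classical all_reals all_analysis.
Set Implicit Arguments. Unset Strict Implicit. Unset Printing Implicit Defensive.
Import Order.TTheory GRing.Theory Num.Theory.
Import numFieldNormedType.Exports.
Local Open Scope ring_scope.

(* Euclidean norm on R^n (the library's norm on matrices is the max norm). *)
Definition euc_norm (R : realType) (n : nat) (v : 'rV[R]_n) : R :=
  Num.sqrt (\sum_(i < n) (v ord0 i) ^+ 2).

Definition grad (R : realType) (n : nat) (f : 'rV[R]_n -> R) (x : 'rV[R]_n)
  : 'rV[R]_n := \row_(i < n) ('d f x (delta_mx ord0 i : 'rV[R]_n)).

Definition convex_fun (R : realType) (n : nat) (f : 'rV[R]_n -> R) : Prop :=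
  forall (x y : 'rV[R]_n) (t : R), 0 <= t -> t <= 1 ->
    f (t *: x + (1 - t) *: y) <= t * f x + (1 - t) * f y.

Definition strongly_convex (R : realType) (n : nat) (m : R)
  (f : 'rV[R]_n -> R) : Prop :=
  convex_fun (fun x => f x - m / 2 * euc_norm x ^+ 2).

Definition in_F (R : realType) (n : nat) (m L : R) (f : 'rV[R]_n -> R) : Prop :=
  [/\ (forall x, differentiable f x),
      continuous (grad f),
      strongly_convex m f &
      forall x1 x2 : 'rV[R]_n,
        euc_norm (grad f x1 - grad f x2) <= L * euc_norm (x1 - x2)].

(* Main.v *)
Require Import Defs.
From HB Require Import structures.
From mathcomp Require Import all_boot all_order all_algebra.
From mathcomp Require Import all_classical all_reals all_analysis.
From mathcomp Require Import ring lra.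
Import Order.TTheory GRing.Theory Num.Theory.
Import numFieldNormedType.Exports.
Local Open Scope ring_scope.


Definition ip {R : realType} {n : nat} (u v : 'rV[R]_n) : R := \sum_(i < n) u ord0 i * v ord0 i.

Lemma dotC {R : realType} {n : nat} (u v : 'rV[R]_n) : ip u v = ip v u.
Proof. by apply: eq_bigr => i _; rewrite mulrC. Qed.

Lemma dot_ge0 {R : realType} {n : nat} (u : 'rV[R]_n) : 0 <= ip u u.
Proof. by apply: sumr_ge0 => i _; rewrite -expr2 sqr_ge0. Qed.

Lemma en2 {R : realType} {n : nat} (u : 'rV[R]_n) : euc_norm u ^+ 2 = ip u u.
Proof.
rewrite /euc_norm sqr_sqrtr; last by apply: sumr_ge0 => i _; rewrite sqr_ge0.
by apply: eq_bigr => i _; rewrite expr2.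
Qed.

Lemma en_ge0 {R : realType} {n : nat} (u : 'rV[R]_n) : 0 <= euc_norm u.
Proof. exact: sqrtr_ge0. Qed.

Lemma dgrad {R : realType} {n : nat} (f : 'rV[R]_n -> R) x v :
  'd f x v = ip (grad f x) v.
Proof.
rewrite {1}(row_sum_delta v) linear_sum /ip; apply: eq_bigr => i _.
by rewrite linearZ /= /grad mxE mulrC.
Qed.


Lemma line_der {R : realType} {n : nat} (f : 'rV[R]_n -> R) (y d : 'rV[R]_n) (t : R) :
  differentiable f (y + t *: d) ->
  is_derive t (1:R) (fun s : R => f (y + s *: d)) (ip (grad f (y + t *: d)) d).
Proof.
move=> df.
set a := y + t *: d.
set phi := fun s : R => f (y + s *: d).
have E : (fun h : R => h^-1 *: ((phi \o shift t) (h *: 1) - phi t)) =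
         (fun h : R => h^-1 *: ((f \o shift a) (h *: d) - f a)).
  apply/funext => h /=; rewrite /phi /a.
  by rewrite [h *: 1]mulr1 scalerDl addrCA addrA.
have Hdv : derivable f a d by apply: diff_derivable.
apply: DeriveDef.
- by rewrite /derivable E.
- rewrite /derive E -/(derive f a d) deriveE //; exact: dgrad.
Qed.

Lemma dotZl {R : realType} {n : nat} (a : R) (u v : 'rV[R]_n) : ip (a *: u) v = a * ip u v.
Proof. rewrite /ip mulr_sumr; apply: eq_bigr => i _; by rewrite mxE mulrA. Qed.
Lemma dotZr {R : realType} {n : nat} (a : R) (u v : 'rV[R]_n) : ip u (a *: v) = a * ip u v.
Proof. by rewrite dotC dotZl dotC. Qed.
Lemma dotDl {R : realType} {n : nat} (u v w : 'rV[R]_n) : ip (u + v) w = ip u w + ip v w.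
Proof. rewrite /ip -big_split; apply: eq_bigr => i _; by rewrite mxE mulrDl. Qed.
Lemma dotDr {R : realType} {n : nat} (u v w : 'rV[R]_n) : ip w (u + v) = ip w u + ip w v.
Proof. by rewrite dotC dotDl !(dotC w). Qed.
Lemma dotNl {R : realType} {n : nat} (u v : 'rV[R]_n) : ip (- u) v = - ip u v.
Proof. by rewrite -scaleN1r dotZl mulN1r. Qed.
Lemma dotNr {R : realType} {n : nat} (u v : 'rV[R]_n) : ip u (- v) = - ip u v.
Proof. by rewrite dotC dotNl dotC. Qed.
Lemma dotBl {R : realType} {n : nat} (u v w : 'rV[R]_n) : ip (u - v) w = ip u w - ip v w.
Proof. by rewrite dotDl dotNl. Qed.
Lemma dotBr {R : realType} {n : nat} (u v w : 'rV[R]_n) : ip w (u - v) = ip w u - ip w v.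
Proof. by rewrite dotDr dotNr. Qed.
Lemma dot0l {R : realType} {n : nat} (u : 'rV[R]_n) : ip 0 u = 0.
Proof. by rewrite -(scale0r 0) dotZl mul0r. Qed.

Lemma amgm {R : realType} {n : nat} (u v : 'rV[R]_n) (l : R) : 0 < l -> 2 * ip u v <= l * ip u u + l^-1 * ip v v.
Proof.
move=> hl; rewrite /ip !mulr_sumr -big_split /= -subr_ge0 -sumrB.
apply: sumr_ge0 => i _.
have -> : l * (u ord0 i * u ord0 i) + l^-1 * (v ord0 i * v ord0 i) -
  2 * (u ord0 i * v ord0 i) = (l * u ord0 i - v ord0 i) ^+ 2 / l.
  by field; rewrite gt_eqF.
by apply: divr_ge0; [exact: sqr_ge0|exact: ltW].
Qed.

Lemma le_line {R : realType} (phi dphi : R -> R) (p : {poly R}) :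
  (forall t, is_derive t (1:R) phi (dphi t)) ->
  (forall t, 0 < t < 1 -> dphi t <= p^`().[t]) ->
  phi 1 - phi 0 <= p.[1] - p.[0].
Proof.
move=> hd hle.
pose psi := fun t => phi t - p.[t].
have hpsi : forall t, is_derive t (1:R) psi (dphi t - p^`().[t]).
  by move=> t; apply: is_deriveB.
have : psi 1 <= psi 0.
  apply: (@ler0_derive1_le_cc _ psi 0 1).
  - by move=> x _; exact: (@ex_derive _ _ _ _ _ _ _ (hpsi x)).
  - move=> x; rewrite in_itv /= => /andP[x0 x1].
    rewrite derive1E (@derive_val _ _ _ _ _ _ _ (hpsi x)) subr_le0.
    by apply: hle; rewrite x0 x1.
  - apply: derivable_within_continuous => x _.
    exact: (@ex_derive _ _ _ _ _ _ _ (hpsi x)).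
  - by rewrite in_itv /= ler01 lexx.
  - by rewrite in_itv /= ler01 lexx.
  - exact: ler01.
rewrite /psi; lra.
Qed.


Lemma lip2 {R : realType} {n : nat} (m L : R) (f : 'rV[R]_n -> R) :
  in_F m L f -> 0 <= L -> forall x1 x2,
  ip (grad f x1 - grad f x2) (grad f x1 - grad f x2) <=
  L ^+ 2 * ip (x1 - x2) (x1 - x2).
Proof.
case=> _ _ _ hlip hL x1 x2.
rewrite -!en2 -exprMn !expr2.
by apply: ler_pM; rewrite ?en_ge0 ?hlip.
Qed.

Lemma descentL {R : realType} {n : nat} (m L : R) (f : 'rV[R]_n -> R) :
  in_F m L f -> 0 < L -> forall y z,
  f z <= f y + ip (grad f y) (z - y) + L / 2 * ip (z - y) (z - y).
Proof.
move=> hF hL y z; have [hd _ _ _] := hF.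
set d := z - y.
have hz : z = y + 1 *: d by rewrite scale1r /d addrC subrK.
have hy : y = y + 0 *: d by rewrite scale0r addr0.
pose p : {poly R} := (ip (grad f y) d) *: 'X + (L/2 * ip d d) *: 'X^2.
have Hder : forall t, is_derive t (1:R) (fun s => f (y + s *: d))
   (ip (grad f (y + t *: d)) d) by move=> t; apply: line_der.
have Hb : forall t, 0 < t < 1 -> ip (grad f (y + t *: d)) d <= p^`().[t].
  move=> t /andP[t0 t1].

  have Ep : p^`().[t] = ip (grad f y) d + L * t * ip d d.
    by rewrite /p derivD !derivZ derivX derivXn !hornerE /=; field.
  rewrite Ep.
  set D := grad f (y + t *: d) - grad f y.
  have hl : 0 < (L * t)^-1 by rewrite invr_gt0 mulr_gt0.
  have h1 := amgm D d ((L * t)^-1) hl.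
  rewrite invrK in h1.
  have h2 := lip2 _ _ _ hF (ltW hL) (y + t *: d) y.
  rewrite -/D (_ : y + t *: d - y = t *: d) in h2; last by rewrite addrC addKr.
  rewrite dotZl dotZr in h2.
  have h3 : (L * t)^-1 * ip D D <= L * t * ip d d.
    apply: le_trans (ler_wpM2l _ h2) _.
      by rewrite invr_ge0 mulr_ge0 // ltW.
    rewrite le_eqVlt; apply/orP; left; apply/eqP; field.
    by rewrite !gt_eqF.
  have : ip D d <= L * t * ip d d by lra.
  rewrite /D dotBl. by rewrite lerBlDl.
have H := @le_line R _ _ p Hder Hb.
rewrite /= -hz -hy /p !hornerE /= !mulr1 !mulr0 in H. lra.
Qed.

Local Open Scope classical_set_scope.

Lemma descentM0 {R : realType} {n : nat} (m L : R) (f : 'rV[R]_n -> R) :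
  in_F m L f -> 0 <= m -> forall y d,
  f y + ip (grad f y) d + m / 2 * ip d d <= f (y + d).
Proof.
move=> hF hm y d; have [hd _ hsc _] := hF.
set z := y + d.
have hz : z = y + d by [].
set q := ip d d.
set K := f z - f y - m / 2 * q.
set phi := fun s : R => f (y + s *: d).
have Hconv : forall t, 0 < t -> t <= 1 -> phi t - phi 0 <= t * K + m / 2 * t ^+ 2 * q.
  move=> t t0 t1.
  have H := hsc z y t (ltW t0) t1.
  rewrite /= !en2 in H.
  move: H.
  have -> : t *: z + (1 - t) *: y = y + t *: d.
    by rewrite hz; apply/matrixP => i j; rewrite !mxE; ring.
  rewrite /phi scale0r addr0 /K /q hz !(dotDl, dotDr, dotZl, dotZr) (dotC d y).
  rewrite -hz => H.
  set A := f (y + t *: d) in H *.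
  set B := f z in H *.
  set C := f y in H *.
  set yy := ip y y in H *. set yd := ip y d in H *. set dd := ip d d in H *.
  have E : (t * (B - C - m / 2 * dd) + m / 2 * t ^+ 2 * dd) - (A - C) =
    (t * (B - m / 2 * (yy + yd + (yd + dd))) + (1 - t) * (C - m / 2 * yy)) -
    (A - m / 2 * (yy + t * yd + (t * yd + t * (t * dd)))) by ring.
  lra.
have Hd : is_derive (0:R) (1:R) phi (ip (grad f y) d).
  have := @line_der R n f y d 0; rewrite scale0r addr0; apply; exact: hd.
have Hc : (fun h : R => h^-1 *: ((phi \o shift 0) (h *: 1) - phi 0)) @ 0^'
    --> ip (grad f y) d.
  have Hc0 := @ex_derive _ _ _ _ _ _ _ Hd.
  rewrite -(@derive_val _ _ _ _ _ _ _ Hd); exact: Hc0.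
have Hr := cvg_dnbhs_at_right Hc.
suff : ip (grad f y) d <= K by rewrite /K; lra.
apply/ler_addgt0Pr => e e0.
apply: (cvgr_to_le Hr); near=> t.
have t0 : 0 < t by near: t; exact: nbhs_right_gt.
have t1 : t < Num.min 1 (e / (m / 2 * q + 1)).
  near: t; apply: nbhs_right_lt; rewrite lt_min ltr01 /=.
  by rewrite divr_gt0 // ltr_wpDl // mulr_ge0 ?dot_ge0 // divr_ge0.
move: t1; rewrite lt_min => /andP[t1 t2].
rewrite /= (_ : t%:A + 0 = t); last by rewrite addr0 [t%:A]mulr1.
have h1 := Hconv t t0 (ltW t1).
have hq : 0 <= m / 2 * q by rewrite mulr_ge0 ?dot_ge0 // divr_ge0.
have h2 : t * (m / 2 * q) <= e.
  move: t2; rewrite ltr_pdivlMr ?ltr_wpDl // => t2.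
  apply: le_trans (ltW t2); rewrite mulrDr mulr1 lerDl; exact: ltW.
change (t^-1 * (phi t - phi 0) <= K + e).
rewrite ler_pdivrMl //.
have -> : t * (K + e) = t * K + t * e by ring.
have : m / 2 * t ^+ 2 * q = t * (t * (m / 2 * q)) by ring.
have : t * (t * (m / 2 * q)) <= t * e by rewrite ler_pM2l.
lra.
Unshelve. all: by end_near.
Qed.

Lemma descentM {R : realType} {n : nat} (m L : R) (f : 'rV[R]_n -> R) :
  in_F m L f -> 0 <= m -> forall y z,
  f y + ip (grad f y) (z - y) + m / 2 * ip (z - y) (z - y) <= f z.
Proof.
move=> hF hm y z; have := descentM0 _ _ _ hF hm y (z - y).
by rewrite (addrC y (z - y)) subrK.
Qed.

Local Close Scope classical_set_scope.


Ltac merge_sums :=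
  rewrite /ip; rewrite ?mulrDr ?mulrBr ?mulrN ?opprD ?opprK;
  do 12! rewrite ?mulr_sumr -?sumrN -?big_split /=.

Lemma ip0 {R : realType} {n : nat} (u : 'rV[R]_n) : ip u u = 0 -> u = 0.
Proof.
move=> h; apply/rowP => i; rewrite mxE.
have H : u ord0 i * u ord0 i = 0.
  by apply: (psumr_eq0P _ h) => // j _; rewrite -expr2 sqr_ge0.
by move: H => /eqP; rewrite mulf_eq0 orbb => /eqP.
Qed.

Lemma grad_min {R : realType} {n : nat} (m L : R) (f : 'rV[R]_n -> R) xs :
  in_F m L f -> 0 < L -> (forall y, f xs <= f y) -> grad f xs = 0.
Proof.
move=> hF hL hmin; apply: ip0.
set g := grad f xs.
have H := descentL _ _ _ hF hL xs (xs - L^-1 *: g).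
have H2 := hmin (xs - L^-1 *: g).
rewrite (_ : xs - L^-1 *: g - xs = (- L^-1) *: g) in H; last first.
  by apply/matrixP => i j; rewrite !mxE; ring.
rewrite !(dotZl, dotZr) -/g in H.
have hg := dot_ge0 g.
apply/eqP; rewrite eq_le hg andbT.
have e1 : L / 2 * (- L^-1 * (- L^-1 * ip g g)) = (2 * L)^-1 * ip g g.
  by field; rewrite gt_eqF.
have e2 : - L^-1 * ip g g = - (L^-1 * ip g g) by ring.
have hL' : 0 < (2 * L)^-1 by rewrite invr_gt0 mulr_gt0.
have e3 : L^-1 * ip g g = 2 * ((2 * L)^-1 * ip g g).
  by field; rewrite gt_eqF.
rewrite e1 e2 e3 in H.
have : (2 * L)^-1 * ip g g <= 0 by lra.
by rewrite pmulr_rle0.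
Qed.

Lemma interp_id {R : realType} {n : nat} (m L : R) (xi xj gi gj : 'rV[R]_n) :
  m < L ->
  let z := xi - (L - m)^-1 *: (gi - gj - m *: (xi - xj)) in
  ip gj (z - xj) + m / 2 * ip (z - xj) (z - xj)
   - (ip gi (z - xi) + L / 2 * ip (z - xi) (z - xi))
   - (ip gj (xi - xj) + m / 2 * ip (xi - xj) (xi - xj)
   + (2 * (L - m))^-1 * ip (gi - gj - m *: (xi - xj)) (gi - gj - m *: (xi - xj))) = 0.
Proof.
move=> hmL z; rewrite /z; merge_sums.
apply: big1 => k _; rewrite !mxE.
field; rewrite !gt_eqF //; lra.
Qed.

Lemma interp {R : realType} {n : nat} (m L : R) (f : 'rV[R]_n -> R) :
  in_F m L f -> 0 <= m -> m < L -> forall xi xj : 'rV[R]_n,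
  f xj + ip (grad f xj) (xi - xj) + m / 2 * ip (xi - xj) (xi - xj)
   + (2 * (L - m))^-1 *
     ip (grad f xi - grad f xj - m *: (xi - xj))
        (grad f xi - grad f xj - m *: (xi - xj)) <= f xi.
Proof.
move=> hF hm hmL xi xj.
have hL : 0 < L by apply: le_lt_trans hmL.
have E := interp_id m L xi xj (grad f xi) (grad f xj) hmL.
move: E; cbv zeta; set z := xi - (L - m)^-1 *: _ => E.
have A := descentL _ _ _ hF hL xi z.
have B := descentM _ _ _ hF hm xj z.
lra.
Qed.


Definition Qf {R : realType} {n : nat} (m L : R) (xi xj gi gj : 'rV[R]_n) : R :=
  ip gj (xi - xj) + m / 2 * ip (xi - xj) (xi - xj)
   + (2 * (L - m))^-1 * ip (gi - gj - m *: (xi - xj)) (gi - gj - m *: (xi - xj)).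

Definition rhoGD {R : realType} (m a d : R) : R := 1 - (1 - d) * a * m.

Lemma quad_pos_d {R : realType} {n : nat} (m L a d : R) (x0 xs g0 g1 e : 'rV[R]_n) :
  0 < m -> m < L -> 0 < d -> d < 1 -> 0 < a ->
  a * ((1 + d) * L + (1 - d) * m) <= 2 ->
  0 <= rhoGD m a d * Qf m L x0 (x0 - a *: (g0 + e)) g0 g1
       + (1 - rhoGD m a d) * Qf m L xs (x0 - a *: (g0 + e)) 0 g1
       + rhoGD m a d * (1 - rhoGD m a d) * Qf m L xs x0 0 g0
       - rhoGD m a d * a / (2 * d) * (d ^+ 2 * ip g0 g0 - ip e e).
Proof.
move=> hm hmL hd0 hd1 ha hstep.
set rho := rhoGD m a d.
have hs : 0 < rho - d * L * a.
  have : 0 < a * (1 - d) * (L - m) by rewrite !mulr_gt0 // subr_gt0.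
  rewrite /rho /rhoGD; nra.
have hrho : 0 <= rho.
  have : 0 <= d * L * a by rewrite !mulr_ge0 // ltW // (lt_trans hm).
  lra.
set k := L - m.
have hk : 0 < k by rewrite subr_gt0.
set s := rho - d * L * a.
set q := 1 - rho.
set ce := a * s / (2 * d).
set be := d * (rho - L * a) / s.
set ga := L * q * d / s.
set cp := rho * (1 - d) * a * L * (2 - a * ((1 + d) * L + (1 - d) * m)) / (2 * k * s).
have hL : 0 < L by apply: lt_trans hmL.
have hce : 0 <= ce.
  by rewrite /ce; apply: divr_ge0; [apply: mulr_ge0|]; [lra|exact: ltW hs|lra].
have hcp : 0 <= cp.
  rewrite /cp; apply: divr_ge0; [repeat apply: mulr_ge0 | apply: mulr_ge0; [lra|exact: ltW hs]]; lra.
have hk2 : 0 <= (2 * k)^-1 by rewrite invr_ge0; lra.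
rewrite /Qf; merge_sums.
apply: sumr_ge0 => i _; rewrite !mxE.
set z := x0 ord0 i. set zs := xs ord0 i. set g := g0 ord0 i.
set h := g1 ord0 i. set ee := e ord0 i.
apply: (@le_trans _ _ ((2 * k)^-1 * (h - L * q * (z - zs) + L * a * (g + ee) - rho * g) ^+ 2
   + ce * (ee + be * g + ga * (z - zs)) ^+ 2 + cp * (g - m * (z - zs)) ^+ 2)).
  by rewrite !addr_ge0 // mulr_ge0 // sqr_ge0.
rewrite le_eqVlt; apply/orP; left; apply/eqP.
rewrite /ce /be /ga /cp /q /k /s /rho /rhoGD.
have hs2 : 0 < 1 - (1 - d) * a * m - d * L * a := hs.
field; rewrite !gt_eqF //; lra.
Qed.

Lemma quad_pos_0 {R : realType} {n : nat} (m L a : R) (x0 xs g0 g1 e : 'rV[R]_n) :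
  0 < m -> m < L -> 0 < a -> a * (L + m) <= 2 -> e = 0 ->
  0 <= rhoGD m a 0 * Qf m L x0 (x0 - a *: (g0 + e)) g0 g1
       + (1 - rhoGD m a 0) * Qf m L xs (x0 - a *: (g0 + e)) 0 g1
       + rhoGD m a 0 * (1 - rhoGD m a 0) * Qf m L xs x0 0 g0.
Proof.
move=> hm hmL ha hstep ->.
set rho := rhoGD m a 0.
have hL : 0 < L by apply: lt_trans hmL.
have hs : 0 < 1 - a * m.
  have : 0 < a * (L - m) by rewrite !mulr_gt0 // subr_gt0.
  nra.
set k := L - m.
have hk : 0 < k by rewrite subr_gt0.
set q := 1 - rho.
set cp := a * L * (2 - a * (L + m)) / (2 * k).
have hcp : 0 <= cp.
  rewrite /cp; apply: divr_ge0; [repeat apply: mulr_ge0|]; lra.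
have hk2 : 0 <= (2 * k)^-1 by rewrite invr_ge0; lra.
rewrite /Qf; merge_sums.
apply: sumr_ge0 => i _; rewrite !mxE.
set z := x0 ord0 i. set zs := xs ord0 i. set g := g0 ord0 i.
set h := g1 ord0 i.
apply: (@le_trans _ _ ((2 * k)^-1 * (h - L * q * (z - zs) + L * a * g - rho * g) ^+ 2
   + cp * (g - m * (z - zs)) ^+ 2)).
  by rewrite !addr_ge0 // mulr_ge0 // sqr_ge0.
rewrite le_eqVlt; apply/orP; left; apply/eqP.
rewrite /cp /q /k /rho /rhoGD.
field; rewrite !gt_eqF //; lra.
Qed.


Lemma rho_bounds {R : realType} (m L a d : R) :
  0 < m -> m < L -> 0 <= d -> d < 1 -> 0 < a ->
  a * ((1 + d) * L + (1 - d) * m) <= 2 ->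
  0 <= rhoGD m a d <= 1.
Proof.
move=> hm hmL hd0 hd1 ha hstep; rewrite /rhoGD.
have h1 : 0 < a * (1 - d) * (L - m) by rewrite !mulr_gt0 // subr_gt0.
have h2 : 0 <= d * L * a by rewrite !mulr_ge0 // ltW // (lt_trans hm).
have h3 : 0 <= (1 - d) * a * m by rewrite !mulr_ge0 // ltW // subr_gt0.
apply/andP; split; nra.
Qed.

Lemma onestep {R : realType} {n : nat} (m L a d : R) (f : 'rV[R]_n -> R)
  (xs x0 e : 'rV[R]_n) :
  in_F m L f -> 0 < m -> m < L -> 0 <= d -> d < 1 -> 0 < a ->
  a * ((1 + d) * L + (1 - d) * m) <= 2 ->
  (forall y, f xs <= f y) ->
  euc_norm e <= d * euc_norm (grad f x0) ->
  f (x0 - a *: (grad f x0 + e)) - f xs <= rhoGD m a d ^+ 2 * (f x0 - f xs).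
Proof.
move=> hF hm hmL hd0 hd1 ha hstep hmin he.
have hL : 0 < L by apply: lt_trans hmL.
have gs : grad f xs = 0 by apply: (grad_min _ _ _ _ hF hL hmin).
have /andP[r0 r1] := rho_bounds _ _ _ _ hm hmL hd0 hd1 ha hstep.
set rho := rhoGD m a d in r0 r1 *.
set Q1 := Qf m L x0 (x0 - a *: (grad f x0 + e)) (grad f x0)
            (grad f (x0 - a *: (grad f x0 + e))).
set Q2 := Qf m L xs (x0 - a *: (grad f x0 + e)) 0
            (grad f (x0 - a *: (grad f x0 + e))).
set Q4 := Qf m L xs x0 0 (grad f x0).
have S : 0 <= rho * Q1 + (1 - rho) * Q2 + rho * (1 - rho) * Q4.
  have [d0|dpos] := eqVneq d 0.
    have e0 : e = 0.
      apply: ip0; apply/eqP; rewrite eq_le dot_ge0 andbT -en2.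
      rewrite d0 mul0r in he.
      have : euc_norm e = 0 by apply/eqP; rewrite eq_le he en_ge0.
      by move=> ->; rewrite expr2 mulr0.
    move: hstep; rewrite /rho /Q1 /Q2 /Q4 d0 => hstep.
    apply: quad_pos_0 => //.
    by move: hstep; rewrite subr0 addr0 !mul1r.
  have hd : 0 < d by rewrite lt_def dpos hd0.
  have hnu : 0 <= rho * a / (2 * d).
    by apply: divr_ge0; [apply: mulr_ge0; [exact: r0|exact: ltW ha]|rewrite mulr_ge0 // ltW].
  have hE : 0 <= d ^+ 2 * ip (grad f x0) (grad f x0) - ip e e.
    rewrite subr_ge0 -!en2 -exprMn.
    by rewrite !expr2; apply: ler_pM; rewrite ?en_ge0.
  have H := quad_pos_d m L a d x0 xs (grad f x0) (grad f (x0 - a *: (grad f x0 + e))) e hm hmL hd hd1 ha hstep.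
  have := addr_ge0 H (mulr_ge0 hnu hE).
  by rewrite subrK.
have I1 := interp _ _ _ hF (ltW hm) hmL x0 (x0 - a *: (grad f x0 + e)).
have I2 := interp _ _ _ hF (ltW hm) hmL xs (x0 - a *: (grad f x0 + e)).
have I4 := interp _ _ _ hF (ltW hm) hmL xs x0.
rewrite gs in I2 I4.
have T1 : 0 <= rho * (f x0 - f (x0 - a *: (grad f x0 + e)) - Q1).
  move: I1; clear -r0; rewrite /Q1 /Qf => I1; apply: mulr_ge0 => //; lra.
have T2 : 0 <= (1 - rho) * (f xs - f (x0 - a *: (grad f x0 + e)) - Q2).
  move: I2; clear -r1; rewrite /Q2 /Qf => I2; apply: mulr_ge0; lra.
have T4 : 0 <= rho * (1 - rho) * (f xs - f x0 - Q4).
  move: I4; clear -r0 r1; rewrite /Q4 /Qf => I4; apply: mulr_ge0; [apply: mulr_ge0|]; lra.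
have key : rho ^+ 2 * (f x0 - f xs) - (f (x0 - a *: (grad f x0 + e)) - f xs) =
  rho * (f x0 - f (x0 - a *: (grad f x0 + e)) - Q1)
  + (1 - rho) * (f xs - f (x0 - a *: (grad f x0 + e)) - Q2)
  + rho * (1 - rho) * (f xs - f x0 - Q4)
  + (rho * Q1 + (1 - rho) * Q2 + rho * (1 - rho) * Q4) by ring.
clear I1 I2 I4; lra.
Qed.



Theorem proposition1p3 (R : realType) (m L alpha delta rho : R) :
  0 < m -> m < L -> 0 <= delta -> delta < 1 ->
  1 / L <= alpha ->
  alpha <= 2 / ((1 + delta) * L + (1 - delta) * m) ->
  Num.max (1 - (1 - delta) * alpha * m) ((1 + delta) * alpha * L - 1) <= rho ->
  exists c : R, 0 < c /\
    forall (n : nat) (f : 'rV[R]_n -> R) (xs : 'rV[R]_n)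
           (x e : nat -> 'rV[R]_n),
      in_F m L f ->
      (forall y, f xs <= f y) ->
      (forall k : nat,
          x k.+1 = x k - alpha *: (grad f (x k) + e k) /\
          euc_norm (e k) <= delta * euc_norm (grad f (x k))) ->
      forall k : nat, euc_norm (x k - xs) <= c * rho ^+ k * euc_norm (x 0%N - xs).
Proof.
move=> hm hmL hd0 hd1 haL hastep hrho.
have hL : 0 < L by apply: lt_trans hmL.
have ha : 0 < alpha by apply: lt_le_trans haL; rewrite mul1r invr_gt0.
have hD : 0 < (1 + delta) * L + (1 - delta) * m.
  by apply: ltr_pwDl; [apply: mulr_gt0|apply: mulr_ge0]; lra.
have hstep : alpha * ((1 + delta) * L + (1 - delta) * m) <= 2.
  by rewrite -ler_pdivlMr.
have /andP[r00 r01] := rho_bounds _ _ _ _ hm hmL hd0 hd1 ha hstep.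
set r0 := rhoGD m alpha delta in r00 r01 *.
have hr : r0 <= rho.
  by move: hrho; rewrite ge_max => /andP[].
have hLm : 1 <= L / m by rewrite ler_pdivlMr // mul1r ltW.
exists (L / m); split; first by rewrite divr_gt0.
move=> n f xs x e hF hmin hx k.
have gs : grad f xs = 0 by apply: (grad_min _ _ _ _ hF hL hmin).
have V : forall k, f (x k) - f xs <= (r0 ^+ 2) ^+ k * (f (x 0%N) - f xs).
  elim => [|j IH]; first by rewrite expr0 mul1r.
  have [hxk hek] := hx j.
  have H1 := onestep _ _ _ _ _ _ _ _ hF hm hmL hd0 hd1 ha hstep hmin hek.
  rewrite -hxk -/r0 in H1.
  apply: le_trans H1 _; rewrite [(r0 ^+ 2) ^+ j.+1]exprS -mulrA; apply: ler_wpM2l => //.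
  exact: sqr_ge0.
have lowb : forall z, m / 2 * ip (z - xs) (z - xs) <= f z - f xs.
  move=> z; have := descentM _ _ _ hF (ltW hm) xs z.
  rewrite gs dot0l; lra.
have upb : forall z, f z - f xs <= L / 2 * ip (z - xs) (z - xs).
  move=> z; have := descentL _ _ _ hF hL xs z.
  rewrite gs dot0l; lra.
set pk := ip (x k - xs) (x k - xs).
set p0 := ip (x 0%N - xs) (x 0%N - xs).
have hp0 : 0 <= p0 by exact: dot_ge0.
have hq : 0 <= (r0 ^+ 2) ^+ k by rewrite exprn_ge0 // sqr_ge0.
have c1 : m / 2 * pk <= (r0 ^+ 2) ^+ k * (L / 2 * p0).
  apply: le_trans (lowb (x k)) _; apply: le_trans (V k) _.
  by apply: ler_wpM2l => //; apply: upb.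
have c2 : pk <= L / m * ((r0 ^+ 2) ^+ k * p0).
  have -> : pk = (m / 2)^-1 * (m / 2 * pk) by field; rewrite gt_eqF.
  apply: le_trans (ler_wpM2l _ c1) _; first by rewrite invr_ge0 divr_ge0 // ltW.
  by rewrite le_eqVlt; apply/orP; left; apply/eqP; field; rewrite gt_eqF.
have c3 : (r0 ^+ 2) ^+ k <= (rho ^+ 2) ^+ k.
  apply: lerXn2r; rewrite ?inE ?nnegrE ?sqr_ge0 //.
  by rewrite !expr2; apply: ler_pM.
have c4 : pk <= (L / m) ^+ 2 * (rho ^+ k) ^+ 2 * p0.
  have e1 : (rho ^+ k) ^+ 2 = (rho ^+ 2) ^+ k by rewrite -!exprM mulnC.
  rewrite e1; apply: le_trans c2 _; rewrite -[(L / m) ^+ 2 * _ * p0]mulrA.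
  apply: ler_pM.
  - by rewrite divr_ge0 // ltW.
  - by rewrite mulr_ge0.
  - rewrite expr2 -{1}(mul1r (L / m)); apply: ler_wpM2r => //.
    by rewrite divr_ge0 // ltW.
  - exact: ler_wpM2r.
have hrho0 : 0 <= rho by apply: le_trans r00 hr.
have hc0 : 0 <= L / m * rho ^+ k * euc_norm (x 0%N - xs).
  apply: mulr_ge0; [apply: mulr_ge0|exact: en_ge0]; [apply: divr_ge0; exact: ltW|exact: exprn_ge0].
have hsq : euc_norm (x k - xs) ^+ 2 <= (L / m * rho ^+ k * euc_norm (x 0%N - xs)) ^+ 2.
  by rewrite !exprMn !en2; move: c4; rewrite /pk /p0 !exprMn.
have := en_ge0 (x k - xs).
move: hsq hc0; set A := euc_norm _; set B := _ * euc_norm _.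
rewrite !expr2 => hsq hc0 hA; nra.
Qed.
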